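(* Let $u_1,\dots,u_n$ be Boolean variables and $C_1,\dots,C_m$ clauses, each consisting of exactly 3 literals over these variables. Let $G$ be the graph with vertex set $\{x_i,u_i,v_i,\bar u_i,y_i:1\le i\le n\}\cup\{c_j:1\le j\le m\}\cup\{s_1,s_2,s_3,s_4,t\}$ and the following edges: for each $i$, $x_iu_i$, $u_iv_i$, $v_i\bar u_i$, $\bar u_iy_i$; for each $j$, an edge from $c_j$ to $u_i$ (resp. $\bar u_i$) whenever the literal $u_i$ (resp. $\bar u_i$) appears in $C_j$; for each $j$ and each $s\in\{s_1,s_3,s_4\}$, the edge $sc_j$; the edges $s_1s_2,s_3s_2,s_4s_2$; the edges $ts_1,ts_3,ts_4$; and the edges $tu_i$, $t\bar u_i$ for all $i$. Then (a) $\tilde\gamma_c(G-e)\le 3n+2$ for every edge $e\in E(G)$, and (b) $\tilde\gamma_c(G)=3n+1$ if and only if $b_{OCD}(G)=1$. Consequently, $\{C_1,\dots,C_m\}$ is satisfiable if and only if $b_{OCD}(G)=1$.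
   Context: All graphs are finite and simple. A set $S\subseteq V$ is a dominating set of $G=(V,E)$ if every vertex not in $S$ is adjacent to a vertex of $S$. A set $\tilde D\subseteq V$ is an outer-connected dominating set of $G$ if $\tilde D$ is dominating and the induced subgraph $G[V\setminus\tilde D]$ is connected (the empty graph counts as connected). $\tilde\gamma_c(G)$ denotes the minimum size of an outer-connected dominating set of $G$. For a graph $G$ without isolated vertices, $b_{OCD}(G)$ is the minimum number of edges whose removal from $G$ yields a graph $G'$ with $\tilde\gamma_c(G')>\tilde\gamma_c(G)$. A collection of clauses is satisfiable if some truth assignment makes every clause contain a true literal. *)

(* Defs.v *)
From HB Require Import structures.
From mathcomp Require Import all_boot.
Set Implicit Arguments. Unset Strict Implicit. Unset Printing Implicit Defensive.

Definition simple_graph (T : finType) (g : rel T) : Prop :=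
  symmetric g /\ irreflexive g.

Definition dominating (T : finType) (g : rel T) (S : {set T}) : bool :=
  [forall x, (x \notin S) ==> [exists y, (y \in S) && g x y]].

(* The induced subgraph g[V \ D] is connected (the empty graph counts as
   connected): any two vertices outside D are joined by a path in g
   staying outside D. *)
Definition outer_connected (T : finType) (g : rel T) (D : {set T}) : bool :=
  [forall x, forall y, (x \notin D) ==> (y \notin D) ==>
     connect (fun a b => [&& g a b, a \notin D & b \notin D]) x y].

Definition ocd_set (T : finType) (g : rel T) (D : {set T}) : bool :=
  dominating g D && outer_connected g D.

(* tilde-gamma_c : minimum size of an outer-connected dominating set
   (setT is always one, so the minimum is over a nonempty family). *)
Definition ocdn (T : finType) (g : rel T) : nat :=
  \big[minn/#|T|]_(D : {set T} | ocd_set g D) #|D|.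

Definition edges (T : finType) (g : rel T) : {set {set T}} :=
  [set [set x; y] | x in T, y in T & g x y].

Definition remove_edges (T : finType) (g : rel T) (F : {set {set T}}) : rel T :=
  fun x y => g x y && ([set x; y] \notin F).

Definition no_isolated (T : finType) (g : rel T) : Prop :=
  forall x, exists y, g x y.

(* b_OCD(g): minimum number of edges whose removal increases ocdn.
   (For a graph without isolated vertices, removing all edges gives
   ocdn = #|T| > ocdn g, so the family is nonempty; the default value
   #|edges g| + 1 is only reached otherwise.) *)
Definition bondage_ocd (T : finType) (g : rel T) : nat :=
  \big[minn/(#|edges g|).+1]_(F : {set {set T}} |
       (F \subset edges g) && (ocdn g < ocdn (remove_edges g F))) #|F|.

(* A literal over variables 'I_n: (i, true) is u_i, (i, false) is bar u_i. *)
Definition literal (n : nat) := ('I_n * bool)%type.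

Definition clause (n : nat) := (3.-tuple (literal n))%type.

Definition lit_true (n : nat) (a : 'I_n -> bool) (l : literal n) : bool :=
  a l.1 == l.2.

Definition satisfiable (n m : nat) (cl : 'I_m -> clause n) : Prop :=
  exists a : 'I_n -> bool, forall j : 'I_m, has (lit_true a) (cl j).

Inductive vtx (n m : nat) : Type :=
| Vx of 'I_n | Vu of 'I_n | Vv of 'I_n | Vubar of 'I_n | Vy of 'I_n
| Vc of 'I_m | Vs1 | Vs2 | Vs3 | Vs4 | Vt.

Arguments Vs1 {n m}. Arguments Vs2 {n m}. Arguments Vs3 {n m}.
Arguments Vs4 {n m}. Arguments Vt {n m}.

Section VtxFin.
Variables n m : nat.

Definition vtx_code (v : vtx n m) : ('I_n * 'I_5) + ('I_m + 'I_5) :=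
  match v with
  | Vx i => inl (i, @Ordinal 5 0 isT) | Vu i => inl (i, @Ordinal 5 1 isT)
  | Vv i => inl (i, @Ordinal 5 2 isT) | Vubar i => inl (i, @Ordinal 5 3 isT)
  | Vy i => inl (i, @Ordinal 5 4 isT) | Vc j => inr (inl j)
  | Vs1 => inr (inr (@Ordinal 5 0 isT)) | Vs2 => inr (inr (@Ordinal 5 1 isT))
  | Vs3 => inr (inr (@Ordinal 5 2 isT)) | Vs4 => inr (inr (@Ordinal 5 3 isT))
  | Vt => inr (inr (@Ordinal 5 4 isT))
  end.

Definition vtx_decode (c : ('I_n * 'I_5) + ('I_m + 'I_5)) : option (vtx n m) :=
  match c with
  | inl (i, k) => match val k with
                  | 0 => Some (Vx m i) | 1 => Some (Vu m i) | 2 => Some (Vv m i)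
                  | 3 => Some (Vubar m i) | 4 => Some (Vy m i) | _ => None end
  | inr (inl j) => Some (Vc n j)
  | inr (inr k) => match val k with
                   | 0 => Some Vs1 | 1 => Some Vs2 | 2 => Some Vs3
                   | 3 => Some Vs4 | 4 => Some Vt | _ => None end
  end.

Lemma vtx_codeK : pcancel vtx_code vtx_decode.
Proof. by case. Qed.

End VtxFin.

HB.instance Definition _ (n m : nat) :=
  Countable.copy (vtx n m) (pcan_type (@vtx_codeK n m)).
HB.instance Definition _ (n m : nat) :=
  Finite.copy (vtx n m) (pcan_type (@vtx_codeK n m)).

Definition adj0 (n m : nat) (cl : 'I_m -> clause n) (a b : vtx n m) : bool :=
  match a, b with
  | Vx i, Vu i' => i == i'
  | Vu i, Vv i' => i == i'
  | Vv i, Vubar i' => i == i'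
  | Vubar i, Vy i' => i == i'
  | Vc j, Vu i => (i, true) \in cl j
  | Vc j, Vubar i => (i, false) \in cl j
  | Vs1, Vc _ | Vs3, Vc _ | Vs4, Vc _ => true
  | Vs1, Vs2 | Vs3, Vs2 | Vs4, Vs2 => true
  | Vt, Vs1 | Vt, Vs3 | Vt, Vs4 => true
  | Vt, Vu _ | Vt, Vubar _ => true
  | _, _ => false
  end.

Definition satG (n m : nat) (cl : 'I_m -> clause n) : rel (vtx n m) :=
  fun a b => adj0 cl a b || adj0 cl b a.

(* Main.v *)
Require Import Defs.
From HB Require Import structures.
From mathcomp Require Import all_boot zify.
Set Implicit Arguments. Unset Strict Implicit. Unset Printing Implicit Defensive.

Lemma bigmin_le (I : finType) (P : pred I) (F : I -> nat) d i0 :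
  P i0 -> \big[minn/d]_(i | P i) F i <= F i0.
Proof.
move=> Pi0; rewrite unlock; have : i0 \in index_enum I by rewrite mem_index_enum.
elim: (index_enum I) => //= a r IH; rewrite in_cons => /orP[/eqP<-|/IH h].
  by rewrite Pi0 geq_minl.
by case: (P a) => //; rewrite geq_min h orbT.
Qed.

Lemma ocdn_le (T : finType) (g : rel T) D : ocd_set g D -> ocdn g <= #|D|.
Proof. exact: bigmin_le. Qed.

Lemma ocdn_ge (T : finType) (g : rel T) k :
  (forall D, ocd_set g D -> k <= #|D|) -> k <= #|T| -> k <= ocdn g.
Proof.
move=> h hT; rewrite /ocdn; elim/big_ind: _ => //.
  by move=> a b ha hb; rewrite leq_min ha hb.
Qed.

Lemma ocd_mono (T : finType) (g1 g2 : rel T) D :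
  (forall x y, g1 x y -> g2 x y) -> ocd_set g1 D -> ocd_set g2 D.
Proof.
move=> sub /andP[/forallP hd /forallP hc]; apply/andP; split.
  apply/forallP=> x; apply/implyP=> xD; have /existsP[y /andP[yD gy]] := implyP (hd x) xD.
  by apply/existsP; exists y; rewrite yD sub.
apply/forallP=> x; apply/forallP=> y; apply/implyP=> xD; apply/implyP=> yD.
have h := implyP (implyP (forallP (hc x) y) xD) yD.
apply: connect_sub h => a b /andP[gab /andP[aD bD]].
by apply: connect1; rewrite sub // aD bD.
Qed.

Lemma minn_or a b : minn a b = a \/ minn a b = b.
Proof. by case: (leqP a b); auto. Qed.

Lemma bigmin_cases (I : finType) (P : pred I) (F : I -> nat) d :
  \big[minn/d]_(i | P i) F i = d \/ exists i, P i /\ \big[minn/d]_(i | P i) F i = F i.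
Proof.
elim/big_ind: _ ; first by left.
  by move=> a b ha hb; case: (minn_or a b) => ->.
by move=> i Pi; right; exists i.
Qed.

Section G.
Variables (n m : nat) (cl : 'I_m -> clause n).
Local Notation T := (vtx n m).
Local Notation G := (satG cl).

Lemma G_sym : symmetric G.
Proof. by move=> x y; rewrite /satG orbC. Qed.

Lemma nbr_x i y : G (Vx m i) y -> y = Vu m i.
Proof. by rewrite /satG; case: y => //= j; rewrite ?orbF => /eqP->. Qed.
Lemma nbr_y i y : G (Vy m i) y -> y = Vubar m i.
Proof. by rewrite /satG; case: y => //= j; rewrite ?orbF => /eqP->. Qed.
Lemma nbr_v i y : G (Vv m i) y -> y = Vu m i \/ y = Vubar m i.
Proof. by rewrite /satG; case: y => //= j; rewrite ?orbF => /eqP->; auto. Qed.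
Lemma nbr_s2 y : G Vs2 y -> y = Vs1 \/ y = Vs3 \/ y = Vs4.
Proof. by rewrite /satG; case: y => //=; auto. Qed.
Lemma nbr_s1 y : G Vs1 y -> y = Vs2 \/ y = Vt \/ exists j, y = Vc n j.
Proof. by rewrite /satG; case: y => //=; eauto. Qed.
Lemma nbr_s3 y : G Vs3 y -> y = Vs2 \/ y = Vt \/ exists j, y = Vc n j.
Proof. by rewrite /satG; case: y => //=; eauto. Qed.
Lemma nbr_s4 y : G Vs4 y -> y = Vs2 \/ y = Vt \/ exists j, y = Vc n j.
Proof. by rewrite /satG; case: y => //=; eauto. Qed.
Lemma nbr_c j y : G (Vc n j) y ->
  y = Vs1 \/ y = Vs3 \/ y = Vs4 \/
      (exists2 i, y = Vu m i & (i, true) \in cl j) \/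
      (exists2 i, y = Vubar m i & (i, false) \in cl j).
Proof.
rewrite /satG; case: y => //=; try by auto.
- by move=> i; rewrite ?orbF => h; do 3 right; left; exists i.
- by move=> i; rewrite ?orbF => h; do 4 right; exists i.
Qed.


Definition inj3 (p : (('I_n + 'I_n) + 'I_n) + (bool + unit)) : T :=
  match p with
  | inl (inl (inl i)) => Vx m i
  | inl (inl (inr i)) => Vu m i
  | inl (inr i) => Vy m i
  | inr (inl true) => Vs1
  | inr (inl false) => Vs2
  | inr (inr _) => Vt
  end.

Lemma inj3_inj : injective inj3.
Proof.
by case=> [[[i|i]|i]|[[|]|[]]] [[[j|j]|j]|[[|]|[]]] //= [->].
Qed.

Lemma card_T : 3 * n + 3 <= #|{: vtx n m}|.
Proof.
have := @leq_card _ _ inj3 inj3_inj.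
rewrite !card_sum !card_ord card_bool card_unit => h; apply: leq_trans h; lia.
Qed.


Lemma connect_step (e : rel T) x z : connect e x z -> x != z -> exists y, e x y.
Proof.
case/connectP=> [[|y p]] /=; first by move=> _ ->; rewrite eqxx.
by case/andP=> h _ _ _; exists y.
Qed.

Section LB.
Variables (H : rel T) (D : {set T}).
Hypothesis HG : forall x y, H x y -> G x y.
Hypothesis Hocd : ocd_set H D.
Hypothesis Hcard : #|D| <= 3 * n + 1.

Lemma domD x : x \notin D -> exists y, y \in D /\ H x y.
Proof.
case/andP: Hocd => /forallP hd _ xD.
by have /existsP[y /andP[yD hy]] := implyP (hd x) xD; exists y.
Qed.

Lemma otherD x : exists z, z \notin D /\ z != x.
Proof.
have hT : 3 * n + 3 <= #|D| + #|~: D| by rewrite cardsC; exact: card_T.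
have : 0 < #|~: D :\ x|.
  move: (cardsD1 x (~: D)); move: Hcard hT; case: (x \in ~: D) => /=; lia.
rewrite card_gt0 => /set0Pn[z]; rewrite in_setD1 in_setC => /andP[zx zD].
by exists z.
Qed.

Lemma isolD x : x \notin D -> (forall y, H x y -> y \in D) -> False.
Proof.
move=> xD hx; have [z [zD zx]] := otherD x.
case/andP: Hocd => _ /forallP hc.
have := implyP (implyP (forallP (hc x) z) xD) zD.
move/connect_step; rewrite eq_sym => /(_ zx) [y /andP[hxy /andP[_ yD]]].
by move: yD; rewrite hx.
Qed.

Lemma xD i : Vx m i \in D.
Proof.
apply/negPn/negP=> h; have [y [yD hy]] := domD h.
move: (nbr_x (HG hy)) => e; subst y.
by apply: (isolD h) => y /HG /nbr_x ->.
Qed.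

Lemma yD i : Vy m i \in D.
Proof.
apply/negPn/negP=> h; have [y [yD hy]] := domD h.
move: (nbr_y (HG hy)) => e; subst y.
by apply: (isolD h) => y /HG /nbr_y ->.
Qed.

Lemma gadD i : [|| Vu m i \in D, Vv m i \in D | Vubar m i \in D].
Proof.
case hv: (Vv m i \in D); first by rewrite orbT.
have [y [yD hy]] := domD (negbT hv).
by case: (nbr_v (HG hy)) => e; subst y; rewrite yD ?orbT.
Qed.

Lemma sD : [|| Vs1 \in D, Vs2 \in D, Vs3 \in D | Vs4 \in D].
Proof.
case h2: (Vs2 \in D); first by rewrite orbT.
have [y [yD hy]] := domD (negbT h2).
by case: (nbr_s2 (HG hy)) => [|[]] e; subst y; rewrite yD ?orbT.
Qed.

Definition chi i : T :=
  if Vu m i \in D then Vu m i else if Vv m i \in D then Vv m i else Vubar m i.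
Definition chs : T :=
  if Vs2 \in D then Vs2 else if Vs1 \in D then Vs1 else if Vs3 \in D then Vs3 else Vs4.

Lemma chi_cases i : chi i = Vu m i \/ chi i = Vv m i \/ chi i = Vubar m i.
Proof. by rewrite /chi; case: ifP => _; [|case: ifP => _]; auto. Qed.

Lemma chiD i : chi i \in D.
Proof.
have := gadD i; rewrite /chi.
by case hu: (Vu m i \in D) => //=; case hv: (Vv m i \in D) => //=; rewrite ?orbF.
Qed.

Lemma chs_cases : chs = Vs1 \/ chs = Vs2 \/ chs = Vs3 \/ chs = Vs4.
Proof. by rewrite /chs; do 3 (case: ifP => _; auto). Qed.

Lemma chsD : chs \in D.
Proof.
have := sD; rewrite /chs.
by case h2: (Vs2 \in D) => //=; case h1: (Vs1 \in D) => //=; case h3: (Vs3 \in D) => //=; rewrite ?orbF.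
Qed.

Definition phi (p : (('I_n + 'I_n) + 'I_n) + unit) : T :=
  match p with
  | inl (inl (inl i)) => Vx m i
  | inl (inl (inr i)) => Vy m i
  | inl (inr i) => chi i
  | inr _ => chs
  end.

Lemma phi_inj : injective phi.
Proof.
case=> [[[i|i]|i]|[]]; case=> [[[j|j]|j]|[]] //=; try by case=> ->.
all: try (case: (chi_cases i) => [->|[->|->]]);
     try (case: (chi_cases j) => [->|[->|->]]);
     try (case: chs_cases => [->|[->|[->|->]]]); try by [].
all: by case=> ->.
Qed.

Lemma phi_sub : phi @: setT \subset D.
Proof.
apply/subsetP=> z /imsetP[p _ ->]; case: p => [[[i|i]|i]|[]] /=.
- exact: xD. - exact: yD. - exact: chiD. - exact: chsD.
Qed.

Lemma card_phi : #|phi @: setT| = 3 * n + 1.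
Proof.
rewrite card_imset; last exact: phi_inj.
rewrite cardsT !card_sum !card_ord card_unit; lia.
Qed.

Lemma Dchar z : z \in D ->
  (exists i, z = Vx m i) \/ (exists i, z = Vy m i) \/ (exists i, z = chi i) \/ z = chs.
Proof.
move=> zD.
have e : #|phi @: setT| = #|D|.
  apply/eqP; rewrite eqn_leq subset_leq_card ?phi_sub // card_phi Hcard //.
have := (subset_cardP e phi_sub) z; rewrite zD => /imsetP[p _ ->].
case: p => [[[i|i]|i]|[]] /=; eauto 6.
Qed.

Lemma notD_t : Vt \notin D.
Proof.
apply/negP=> /Dchar [[i]|[[i]|[[i]|]]] //; first by case: (chi_cases i) => [->|[->|->]].
by case: chs_cases => [->|[->|[->|->]]].
Qed.

Lemma notD_c j : Vc n j \notin D.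
Proof.
apply/negP=> /Dchar [[i]|[[i]|[[i]|]]] //; first by case: (chi_cases i) => [->|[->|->]].
by case: chs_cases => [->|[->|[->|->]]].
Qed.

Lemma notD_s_chs s : s \in D -> (s = Vs1 \/ s = Vs2 \/ s = Vs3 \/ s = Vs4) -> s = chs.
Proof.
move=> sD [|[|[|]]] e; subst s; move: sD => /Dchar [[i]|[[i]|[[i]|]]] //;
  by case: (chi_cases i) => [->|[->|->]].
Qed.

Lemma sb_undom s : s \notin D -> (forall y, H s y -> y = Vs2 \/ y = Vt \/ exists j, y = Vc n j) ->
   Vs2 \notin D -> False.
Proof.
move=> sD hn s2D; have [y [yD hy]] := domD sD.
case: (hn _ hy) => [e|[e|[j e]]]; subst y.
- by rewrite yD in s2D.
- by move: notD_t; rewrite yD.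
- by move: (notD_c j); rewrite yD.
Qed.

Lemma s2D : Vs2 \in D.
Proof.
apply/negPn/negP=> h2.
have hchs : chs = (if Vs1 \in D then Vs1 else if Vs3 \in D then Vs3 else Vs4).
  by rewrite /chs (negbTE h2).
case h1: (Vs1 \in D).
- have h3 : Vs3 \notin D.
    apply/negP=> h3; have := notD_s_chs h3; rewrite hchs h1 => /(_ ltac:(auto)).
    by [].
  by apply: (sb_undom h3) => // y /HG /nbr_s3.
- by apply: (sb_undom (negbT h1)) => // y /HG /nbr_s1.
Qed.

Lemma chs_s2 : chs = Vs2.
Proof. by rewrite /chs s2D. Qed.

Lemma notD_s1 : Vs1 \notin D.
Proof. by apply/negP=> h; have := notD_s_chs h; rewrite chs_s2 => /(_ ltac:(auto)). Qed.

Lemma chi_u i : Vu m i \in D -> Vubar m i \notin D.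
Proof.
move=> hu; apply/negP=> /Dchar [[j]|[[j]|[[j e]|]]] //; last by rewrite chs_s2.
have hci : chi i = Vu m i by rewrite /chi hu.
case: (chi_cases j) (e) => [hj|[hj|hj]]; rewrite hj // => -[ej]; subst j.
by rewrite hci in hj.
Qed.

End LB.


Definition KR (g : rel T) (D : {set T}) := fun a b => [&& g a b, a \notin D & b \notin D].

Lemma oc_via (g : rel T) (D : {set T}) t0 : symmetric g ->
  (forall x, x \notin D -> connect (KR g D) x t0) -> outer_connected g D.
Proof.
move=> sg h; apply/forallP=> x; apply/forallP=> y; apply/implyP=> xD; apply/implyP=> yD.
have sK : connect_sym (KR g D).
  by apply: sym_connect_sym => a b; rewrite /KR sg; congr (_ && _); apply: andbC.
by apply: connect_trans (h x xD) _; rewrite sK; apply: h.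
Qed.

Lemma cstep (g : rel T) (D : {set T}) x y t0 :
  g x y -> x \notin D -> y \notin D -> connect (KR g D) y t0 -> connect (KR g D) x t0.
Proof. by move=> gxy xD yD; apply: connect_trans; apply: connect1; rewrite /KR gxy xD yD. Qed.

Lemma dom_intro (g : rel T) (D : {set T}) :
  (forall x, x \notin D -> exists2 y, y \in D & g x y) -> dominating g D.
Proof.
move=> h; apply/forallP=> x; apply/implyP=> xD; have [y yD gy] := h x xD.
by apply/existsP; exists y; rewrite yD gy.
Qed.

Lemma set2_eq (u w p q : T) : [set u; w] = [set p; q] -> (u = p /\ w = q) \/ (u = q /\ w = p).
Proof.
move=> e.
have hu : u \in [set p; q] by rewrite -e !inE eqxx.
have hw : w \in [set p; q] by rewrite -e !inE eqxx orbT.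
have hp : p \in [set u; w] by rewrite e !inE eqxx.
have hq : q \in [set u; w] by rewrite e !inE eqxx orbT.
move: hu hw hp hq; rewrite !inE.
by do 4 (case/orP=> /eqP ?); subst; auto.
Qed.


Ltac cs y := apply: (cstep (y := y));
  [ by rewrite /satG /= ?eqxx ?orbT | by rewrite ?inE | by rewrite ?inE | ].

Section Sat.
Variables (a : 'I_n -> bool) (i0 : 'I_n).
Hypothesis Ha : forall j, has (lit_true a) (cl j).

Definition inDs (v : T) : bool :=
  match v with
  | Vx _ | Vy _ | Vs2 => true
  | Vu i => a i | Vubar i => ~~ a i
  | _ => false end.
Definition Dsat : {set T} := [set v | inDs v].
Definition chosen i : T := if a i then Vu m i else Vubar m i.
Definition other i : T := if a i then Vubar m i else Vu m i.

Lemma chosenD i : chosen i \in Dsat.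
Proof. by rewrite /chosen; case h: (a i); rewrite inE /= ?h. Qed.
Lemma otherND i : other i \notin Dsat.
Proof. by rewrite /other; case h: (a i); rewrite inE /= ?h. Qed.

Lemma Dsat_ocd : ocd_set G Dsat.
Proof.
apply/andP; split.
  apply: dom_intro => -[i|i|i|i|i|j| | | | | ]; rewrite inE //=.
  - by move=> h; exists (Vx m i); rewrite ?inE // /satG /= eqxx.
  - by move=> _; exists (chosen i); rewrite ?chosenD // /chosen /satG; case: (a i) => /=; rewrite eqxx.
  - by move=> h; exists (Vy m i); rewrite ?inE // /satG /= eqxx.
  - move=> _; have /hasP[[i b] il /eqP /= hb] := Ha j.
    exists (if b then Vu m i else Vubar m i).
      by move: il hb; rewrite inE; case: b => /= _ ->.
    by move: il hb; rewrite /satG; case: b => /= -> _.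
  - by exists Vs2; rewrite ?inE.
  - by exists Vs2; rewrite ?inE.
  - by exists Vs2; rewrite ?inE.
  - by exists (chosen i0); rewrite ?chosenD // /chosen /satG; case: (a i0).
apply: (@oc_via _ _ Vt); first exact: G_sym.
have tD : Vt \notin Dsat by rewrite inE.
have s1D : Vs1 \notin Dsat by rewrite inE.
move=> -[i|i|i|i|i|j| | | | | ]; rewrite inE /= => hx //.
- cs (Vt : T); exact: connect0.
- apply: (cstep (y := other i)); [ | by rewrite inE | exact: otherND | ].
    by rewrite /other /satG; case: (a i) => /=; rewrite eqxx.
  apply: (cstep (y := Vt)); [ | exact: otherND | by [] | exact: connect0].
  by rewrite /other /satG; case: (a i).
- cs (Vt : T); exact: connect0.
- cs (Vs1 : T); cs (Vt : T); exact: connect0.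
- cs (Vt : T); exact: connect0.
- cs (Vt : T); exact: connect0.
- cs (Vt : T); exact: connect0.
Qed.

Definition fsat (p : (('I_n + 'I_n) + 'I_n) + unit) : T :=
  match p with
  | inl (inl (inl i)) => Vx m i
  | inl (inl (inr i)) => Vy m i
  | inl (inr i) => chosen i
  | inr _ => Vs2
  end.

Lemma Dsat_card : #|Dsat| <= 3 * n + 1.
Proof.
have sub : Dsat \subset fsat @: setT.
  apply/subsetP=> -[i|i|i|i|i|j| | | | | ]; rewrite inE //= => h.
  - by apply/imsetP; exists (inl (inl (inl i))).
  - by apply/imsetP; exists (inl (inr i)); rewrite //= /chosen h.
  - by apply/imsetP; exists (inl (inr i)); rewrite //= /chosen (negbTE h).
  - by apply/imsetP; exists (inl (inl (inr i))).
  - by apply/imsetP; exists (inr tt).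
apply: leq_trans (subset_leq_card sub) _; apply: leq_trans (leq_imset_card _ _) _.
rewrite cardsT !card_sum !card_ord card_unit; lia.
Qed.

End Sat.


Inductive lc := LU | LV | LB.
Inductive sidx := I1 | I3 | I4.
Definition isU L := if L is LU then true else false.
Definition isV L := if L is LV then true else false.
Definition isB L := if L is LB then true else false.
Definition sv k : T := match k with I1 => Vs1 | I3 => Vs3 | I4 => Vs4 end.
Definition is_s k (v : T) : bool :=
  match k, v with I1, Vs1 | I3, Vs3 | I4, Vs4 => true | _, _ => false end.
Definition distinct3 a b c : bool :=
  match a, b, c with
  | I1, I3, I4 | I1, I4, I3 | I3, I1, I4 | I3, I4, I1 | I4, I1, I3 | I4, I3, I1 => true
  | _, _, _ => false end.

Definition inDa L a (v : T) : bool :=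
  match v with
  | Vx _ | Vy _ | Vs2 => true
  | Vu _ => isU L | Vv _ => isV L | Vubar _ => isB L
  | Vs1 | Vs3 | Vs4 => is_s a v
  | _ => false end.
Definition Da L a : {set T} := [set v | inDa L a v].

Definition Kd L a b c (r : bool) (u w : T) : bool :=
  match u, w with
  | Vx i, Vu i' => (i == i') && ~~ isU L
  | Vy i, Vubar i' => (i == i') && ~~ isB L
  | Vu i, Vv i' => (i == i') && ~~ isV L
  | Vv i, Vubar i' => (i == i') && ~~ isV L
  | Vt, Vu _ => ~~ isU L
  | Vt, Vubar _ => ~~ isB L
  | Vt, w => is_s a w || is_s b w || (r && is_s c w)
  | Vc _, w => is_s a w || is_s b w || (~~ r && is_s c w)
  | Vs2, w => is_s b w || is_s c w
  | _, _ => false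
  end.
Definition K L a b c r : rel T := fun u w => Kd L a b c r u w || Kd L a b c r w u.

Lemma K_sym L a b c r : symmetric (K L a b c r).
Proof. by move=> u w; rewrite /K orbC. Qed.

Lemma K_G L a b c r u w : K L a b c r u w -> G u w.
Proof.
rewrite /K /Kd /satG.
case: u => [i|i|i|i|i|j| | | | | ]; case: w => [i'|i'|i'|i'|i'|j'| | | | | ] //=;
  rewrite ?orbF ?orbT //; try by case: a; case: b; case: c; case: r.
all: try by case/andP=> /eqP-> _; rewrite eqxx ?orbT.
all: try by case/andP=> /eqP-> _; rewrite eqxx.
Qed.


Ltac tryw w := exists w; [ by rewrite inE | by rewrite /K /Kd /= ?eqxx ?orbT ].
Ltac ks y := apply: (cstep (y := y));
  [ by rewrite /K /Kd /= ?eqxx ?orbT | by rewrite ?inE | by rewrite ?inE | ].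

Ltac sfin := first [ ks (Vt : T); exact: connect0
  | ks (Vs1 : T); ks (Vt : T); exact: connect0
  | ks (Vs3 : T); ks (Vt : T); exact: connect0
  | ks (Vs4 : T); ks (Vt : T); exact: connect0 ].

Lemma Da_ocd L a b c r (Hm : 0 < m) : distinct3 a b c -> ocd_set (K L a b c r) (Da L a).
Proof.
set j0 := Ordinal Hm.
case: a b c => [] [] [] // _; case: r; apply/andP; split.
all: try (apply: dom_intro => -[i|i|i|i|i|j| | | | | ]; rewrite inE /= => hx; [
  by []
| by tryw (Vx m i)
| by case: L hx => // _; [tryw (Vu m i) | tryw (Vubar m i)]
| by tryw (Vy m i)
| by []
| by first [tryw (Vs1 : T) | tryw (Vs3 : T) | tryw (Vs4 : T)]
| by tryw (Vs2 : T)
| by []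
| by tryw (Vs2 : T)
| by tryw (Vs2 : T)
| by first [tryw (Vs1 : T) | tryw (Vs3 : T) | tryw (Vs4 : T)] ]).
all: apply: (@oc_via _ _ Vt); first exact: K_sym.
all: move=> -[i|i|i|i|i|j| | | | | ]; rewrite inE /= => hx //.
all: try by ks (Vt : T); exact: connect0.
all: try by case: L hx => // _; [ks (Vubar m i) | ks (Vu m i)]; ks (Vt : T); exact: connect0.
all: try by sfin.
all: by ks (Vc n j0); sfin.
Qed.


Definition Lv L i : T := match L with LU => Vu m i | LV => Vv m i | LB => Vubar m i end.
Definition fa a (p : (('I_n + 'I_n) + 'I_n) + bool) L : T :=
  match p with
  | inl (inl (inl i)) => Vx m i
  | inl (inl (inr i)) => Vy m i
  | inl (inr i) => Lv L i
  | inr true => Vs2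
  | inr false => sv a
  end.

Lemma Da_card L a : #|Da L a| <= 3 * n + 2.
Proof.
have sub : Da L a \subset (fun p => fa a p L) @: setT.
  apply/subsetP=> -[i|i|i|i|i|j| | | | | ]; rewrite inE //= => h.
  - by apply/imsetP; exists (inl (inl (inl i))).
  - by apply/imsetP; exists (inl (inr i)); case: L h.
  - by apply/imsetP; exists (inl (inr i)); case: L h.
  - by apply/imsetP; exists (inl (inr i)); case: L h.
  - by apply/imsetP; exists (inl (inl (inr i))).
  - by apply/imsetP; exists (inr false); case: a h.
  - by apply/imsetP; exists (inr true).
  - by apply/imsetP; exists (inr false); case: a h.
  - by apply/imsetP; exists (inr false); case: a h.
apply: leq_trans (subset_leq_card sub) _; apply: leq_trans (leq_imset_card _ _) _.
rewrite cardsT !card_sum !card_ord card_bool; lia.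
Qed.

Lemma key (Hm : 0 < m) L a b c r x y : distinct3 a b c -> ~~ K L a b c r x y ->
  ocdn (remove_edges G [set [set x; y]]) <= 3 * n + 2.
Proof.
move=> hd hK; apply: leq_trans (Da_card L a).
apply: ocdn_le; apply: ocd_mono (Da_ocd L r Hm hd).
move=> u w huw; rewrite /remove_edges (K_G huw) /= in_set1.
apply/negP=> /eqP /set2_eq [[eu ew]|[eu ew]]; subst u w.
  by rewrite huw in hK.
by rewrite K_sym huw in hK.
Qed.

Lemma part_a (Hm : 0 < m) x y : G x y ->
  ocdn (remove_edges G [set [set x; y]]) <= 3 * n + 2.
Proof.
rewrite /satG; case: x => [i|i|i|i|i|j| | | | | ]; case: y => [i'|i'|i'|i'|i'|j'| | | | | ] //= _;
  first [ apply: (@key Hm LU I1 I3 I4 true); by rewrite /K /Kd /= ?andbF ?orbF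
        | apply: (@key Hm LV I1 I3 I4 true); by rewrite /K /Kd /= ?andbF ?orbF
        | apply: (@key Hm LB I1 I3 I4 true); by rewrite /K /Kd /= ?andbF ?orbF
        | apply: (@key Hm LV I3 I4 I1 true); by rewrite /K /Kd /= ?andbF ?orbF
        | apply: (@key Hm LV I1 I4 I3 true); by rewrite /K /Kd /= ?andbF ?orbF
        | apply: (@key Hm LV I3 I1 I4 true); by rewrite /K /Kd /= ?andbF ?orbF
        | apply: (@key Hm LV I4 I1 I3 true); by rewrite /K /Kd /= ?andbF ?orbF
        | apply: (@key Hm LV I3 I4 I1 false); by rewrite /K /Kd /= ?andbF ?orbF
        | apply: (@key Hm LV I1 I4 I3 false); by rewrite /K /Kd /= ?andbF ?orbF
        | apply: (@key Hm LV I1 I3 I4 false); by rewrite /K /Kd /= ?andbF ?orbF ].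
Qed.



Lemma LB_card (H : rel T) (D : {set T}) : (forall x y, H x y -> G x y) -> ocd_set H D -> 3 * n + 1 <= #|D|.
Proof.
move=> HG Hocd; case: (leqP #|D| (3 * n + 1)) => [Hc|]; last exact: ltnW.
by rewrite -(card_phi Hocd Hc) subset_leq_card // (phi_sub HG Hocd Hc).
Qed.

Lemma ocdn_attained (g : rel T) : ocdn g = #|{: vtx n m}| \/ exists D, ocd_set g D /\ ocdn g = #|D|.
Proof. by case: (bigmin_cases (fun D => ocd_set g D) (fun D => #|D|) #|{: vtx n m}|); auto. Qed.

Lemma ocdn_G_ge : 3 * n + 1 <= ocdn G.
Proof.
apply: ocdn_ge; first by move=> D; apply: LB_card.
by apply: leq_trans _ card_T; rewrite leq_add2l.
Qed.

Lemma ocdn_sat : ocdn G <= 3 * n + 1 -> satisfiable cl.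
Proof.
move=> h; case: (ocdn_attained G) => [e|[D [Hocd e]]].
  by move: h card_T; rewrite e => h1 h2; have := leq_trans h2 h1; rewrite leq_add2l.
have HG : forall x y, G x y -> G x y by [].
have Hc : #|D| <= 3 * n + 1 by rewrite -e.
exists (fun i => Vu m i \in D) => j.
have [y [yD hy]] := domD Hocd (notD_c HG Hocd Hc j).
have ns1 := notD_s1 HG Hocd Hc.
have ns : forall s, s = Vs3 \/ s = Vs4 -> s \notin D.
  move=> s0 hs; apply/negP=> h0; have := notD_s_chs HG Hocd Hc h0.
  by rewrite (chs_s2 HG Hocd Hc) => /(_ ltac:(case: hs; auto)) e2; case: hs; rewrite e2.
case: (nbr_c hy) => [e1|[e1|[e1|[[i e1 il]|[i e1 il]]]]]; subst y.
- by rewrite yD in ns1.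
- by have := ns Vs3 (or_introl erefl); rewrite yD.
- by have := ns Vs4 (or_intror erefl); rewrite yD.
- by apply/hasP; exists (i, true) => //; rewrite /lit_true /= yD.
- apply/hasP; exists (i, false) => //; rewrite /lit_true /=.
  case hu: (Vu m i \in D) => //.
  by have := chi_u HG Hocd Hc hu; rewrite yD.
Qed.

Lemma sat_ocdn (Hm : 0 < m) : satisfiable cl -> ocdn G <= 3 * n + 1.
Proof.
case=> a Ha.
have i0 : 'I_n := (tnth (cl (Ordinal Hm)) ord0).1.
apply: leq_trans (ocdn_le (Dsat_ocd i0 Ha)) _; exact: Dsat_card.
Qed.

Definition F0 : {set {set T}} := [set [set Vs1; Vs2]].

Lemma ocdn_s12 : 3 * n + 2 <= ocdn (remove_edges G F0).
Proof.
have HG : forall x y, remove_edges G F0 x y -> G x y by move=> x y /andP[].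
apply: ocdn_ge; last first.
  by apply: leq_trans _ card_T; rewrite leq_add2l.
move=> D Hocd; case: (leqP #|D| (3 * n + 1)) => [Hc|h]; last by lia.
exfalso; have [y [yD hy]] := domD Hocd (notD_s1 HG Hocd Hc).
case: (nbr_s1 (HG _ _ hy)) => [e1|[e1|[j e1]]]; subst y.
- by move: hy; rewrite /remove_edges /F0 in_set1 eqxx andbF.
- by have := notD_t HG Hocd Hc; rewrite yD.
- by have := notD_c HG Hocd Hc j; rewrite yD.
Qed.

Lemma e12_edge : [set Vs1; Vs2] \in edges G.
Proof. by apply/imset2P; exists (Vs1 : T) (Vs2 : T); rewrite ?inE. Qed.

End G.

From Stdlib Require Import FunctionalExtensionality.

Lemma remove0 (T : finType) (g : rel T) : remove_edges g set0 = g.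
Proof.
apply: functional_extensionality => x; apply: functional_extensionality => y.
by rewrite /remove_edges in_set0 andbT.
Qed.

Theorem claim5p4 (n m : nat) (cl : 'I_m -> clause n)
  (Hm : 0 < m) (Hcl : forall j : 'I_m, uniq (cl j)) :
  (forall x y : vtx n m, satG cl x y ->
     ocdn (remove_edges (satG cl) [set [set x; y]]) <= 3 * n + 2)
  /\ (ocdn (satG cl) = 3 * n + 1 <-> bondage_ocd (satG cl) = 1)
  /\ (satisfiable cl <-> bondage_ocd (satG cl) = 1).
Proof.
have pa : forall x y : vtx n m, satG cl x y ->
     ocdn (remove_edges (satG cl) [set [set x; y]]) <= 3 * n + 2.
  by move=> x y; exact: part_a.
have ge := ocdn_G_ge cl.
set P := fun F : {set {set vtx n m}} =>
  (F \subset edges (satG cl)) && (ocdn (satG cl) < ocdn (remove_edges (satG cl) F)).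
have bond1 : ocdn (satG cl) = 3 * n + 1 -> bondage_ocd (satG cl) = 1.
  move=> e; apply/eqP; rewrite eqn_leq; apply/andP; split.
    have cF0 : P (F0 n m).
      have := ocdn_s12 cl; rewrite /P /F0 sub1set e12_edge /= e; lia.
    have := @bigmin_le _ P (fun F => #|F|) (#|edges (satG cl)|).+1 _ cF0.
    by rewrite /F0 cards1.
  case: (bigmin_cases P (fun F => #|F|) (#|edges (satG cl)|).+1) => [e1|[F [PF e1]]];
    rewrite /bondage_ocd -/P ?e1 //.
  rewrite lt0n; apply/negP=> /eqP /cards0_eq F0'; subst F.
  by move: PF; rewrite /P remove0 ltnn andbF.
have bond2 : bondage_ocd (satG cl) = 1 -> ocdn (satG cl) = 3 * n + 1.
  rewrite /bondage_ocd -/P.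
  case: (bigmin_cases P (fun F => #|F|) (#|edges (satG cl)|).+1) => [->|[F [PF ->]]].
    move=> [] /eqP; rewrite cards_eq0 => /eqP e0.
    by have := e12_edge cl; rewrite e0 in_set0.
  move/eqP/cards1P=> [e0 eF]; subst F; move: PF; rewrite /P sub1set => /andP[he hlt].
  case/imset2P: he => x y hx hxy e0'; subst e0; move: hxy; rewrite inE => /andP[_ hxy].
  have := leq_trans hlt (pa x y hxy); lia.
split; first exact: pa.
split; first by split.
split.
  move=> hs; apply: bond1; apply/eqP; rewrite eqn_leq ge andbT.
  exact: sat_ocdn.
by move=> /bond2 e; apply: ocdn_sat; rewrite e.
Qed.
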